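(* Let $\mathcal{R}$ be a ring and $(\mathcal{C}^{\bullet},\partial)$ a bigraded cochain complex of $\mathcal{R}$-modules as in the context. Then there exists a well-defined $\mathcal{R}$-linear map $\rho_{k}:\mathcal{A}^{k}\to H^{k+1}(\mathcal{N}_{0},\overline{\partial})$ given by \[ \rho_{k}(\xi):=[\partial_{2,-1}\xi_{k-1,1}+\partial_{1,0}\eta_{k,0}], \] where $\eta\in\mathcal{C}^{k}$ is any element with $\pi_{1}\eta=\xi$ and $\pi_{1}(\partial\eta)=0$ (the class being independent of this choice). Moreover, $\mathcal{Z}^{k}_{1}=\ker(\rho_{k})$.
   Context: Setting: $\mathcal{C}^{k}=\bigoplus_{p+q=k}\mathcal{C}^{p,q}$ with $\mathcal{C}^{p,q}=\{0\}$ if $p<0$ or $q<0$; $\partial$ is $\mathcal{R}$-linear of degree $1$, $\partial^{2}=0$, $\partial=\partial_{2,-1}+\partial_{1,0}+\partial_{0,1}$ with $\partial_{i,j}(\mathcal{C}^{p,q})\subseteq\mathcal{C}^{p+i,q+j}$. For $\eta\in\mathcal{C}^k$, $\eta_{p,q}$ is its $\mathcal{C}^{p,q}$-component. $G^{q}\mathcal{C}:=\bigoplus_{j\geq q}\mathcal{C}^{i,j}$, $\pi_{q}:\mathcal{C}\to G^{q}\mathcal{C}$ the projection along the bigrading. $\mathcal{N}^{p,q}:=\ker(\partial_{0,1}|_{\mathcal{C}^{p,q}})\cap\ker(\partial_{2,-1}|_{\mathcal{C}^{p,q}})$, $\mathcal{N}_{q}:=\bigoplus_{p}\mathcal{N}^{p-q,q}$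 (degree-$m$ part $\mathcal{N}^{m-q,q}$), a subcomplex with differential $\overline{\partial}:=\partial|_{\mathcal{N}_q}$; in particular $\mathcal{N}_0$ consists of the $\partial_{0,1}$-closed elements of $\mathcal{C}^{\bullet,0}$. $\mathcal{A}^{k}:=\{\pi_{1}(\eta)\mid\eta\in\mathcal{C}^{k},\ \pi_{1}(\partial\eta)=0\}$. $\mathcal{M}^{k}:=\{\eta\in\mathcal{C}^{k}\mid(\partial\eta)_{i,j}\in B^{k+1}(\mathcal{N}_{j},\overline{\partial})\ \forall\, i+j=k+1\}$ and $\mathcal{Z}^{k}_{1}:=\{\pi_{1}(\eta)\mid\eta\in\mathcal{M}^{k},\ \pi_{1}(\partial\eta)=0\}$. *)

(* Defs.v *)
From HB Require Import structures.
From mathcomp Require Import all_boot all_order all_algebra.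
Set Implicit Arguments. Unset Strict Implicit. Unset Printing Implicit Defensive.
Import Order.TTheory GRing.Theory Num.Theory.
Local Open Scope ring_scope.

(* A bigraded cochain complex  C = (+)_{p,q >= 0} C^{p,q}  of left R-modules,
   presented as an ambient R-module V together with the family of projections
   P p q : V -> C^{p,q} along the bigrading (internal direct sum), and the three
   pieces  d21 = ∂_{2,-1}, d10 = ∂_{1,0}, d01 = ∂_{0,1}  of ∂. Components with a
   negative index are {0}: this is encoded by p q : nat and by  d21 C^{p,0} = 0. *)
Record bicomplex (R : pzRingType) (V : lmodType R) := BiComplex {
  P : nat -> nat -> {linear V -> V};
  P_orth : forall p q p' q' v,
     P p q (P p' q' v) = if (p == p') && (q == q') then P p' q' v else 0;
  P_fin : forall v, exists n : nat, v = \sum_(p < n) \sum_(q < n) P p q v;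
  d21 : {linear V -> V};
  d10 : {linear V -> V};
  d01 : {linear V -> V};
  d21_hom : forall p q v, d21 (P p q.+1 v) = P p.+2 q (d21 (P p q.+1 v));
  d21_0 : forall p v, d21 (P p 0 v) = 0;
  d10_hom : forall p q v, d10 (P p q v) = P p.+1 q (d10 (P p q v));
  d01_hom : forall p q v, d01 (P p q v) = P p q.+1 (d01 (P p q v));
  dd_0 : forall v, let d := fun w => d21 w + d10 w + d01 w in d (d v) = 0
}.

Section Defs.
Variables (R : pzRingType) (V : lmodType R) (C : bicomplex V).

Definition dtot (v : V) : V := d21 C v + d10 C v + d01 C v.

Definition inC (p q : nat) (v : V) : Prop := P C p q v = v.

Definition inDeg (k : nat) (v : V) : Prop :=
  v = \sum_(i < k.+1) P C i (k - i)%N v.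

(* π_1 restricted to C^k : keeps the components in C^{i,j}, j >= 1, i+j = k *)
Definition pi1 (k : nat) (v : V) : V := \sum_(i < k) P C i (k - i)%N v.

Definition inNpq (p q : nat) (v : V) : Prop :=
  inC p q v /\ d01 C v = 0 /\ d21 C v = 0.

(* degree-m part of N_q, i.e. N^{m-q,q} (which is {0} when m < q) *)
Definition inN (q m : nat) (v : V) : Prop :=
  if (q <= m)%N then inNpq (m - q)%N q v else v = 0.

(* B^{m+1}(N_q, dbar) = dbar (N_q^m) *)
Definition inBN (q m : nat) (v : V) : Prop :=
  exists x, inN q m x /\ v = dtot x.

Definition inZN (q m : nat) (v : V) : Prop := inN q m v /\ dtot v = 0.

Definition inA (k : nat) (xi : V) : Prop :=
  exists eta, inDeg k eta /\ pi1 k.+1 (dtot eta) = 0 /\ pi1 k eta = xi.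

Definition inM (k : nat) (eta : V) : Prop :=
  inDeg k eta /\
  forall j : nat, (j <= k.+1)%N -> inBN j k (P C (k.+1 - j)%N j (dtot eta)).

Definition inZ1 (k : nat) (xi : V) : Prop :=
  exists eta, inM k eta /\ pi1 k.+1 (dtot eta) = 0 /\ pi1 k eta = xi.

Definition rho_rep (k : nat) (eta : V) : V :=
  (if k is k'.+1 then d21 C (P C k' 1 eta) else 0) + d10 C (P C k 0 eta).

(* Cohomology classes modulo B^{k+1}(N_0): cosets  x + B^{k+1}(N_0)  as subsets of V. *)
Definition cls (k : nat) (x : V) : V -> Prop := fun y => inBN 0 k (y - x).
Definition cls0 (k : nat) : V -> Prop := cls k 0.
Definition clsAdd (k : nat) (X Y : V -> Prop) : V -> Prop :=
  fun z => exists x y, X x /\ Y y /\ inBN 0 k (z - (x + y)).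
Definition clsScale (k : nat) (a : R) (X : V -> Prop) : V -> Prop :=
  fun z => exists x, X x /\ inBN 0 k (z - a *: x).

End Defs.

(* Main.v *)
Require Import Defs.
From HB Require Import structures.
From mathcomp Require Import all_boot all_order all_algebra.
From mathcomp Require Import zify.
From Stdlib Require Import FunctionalExtensionality PropExtensionality.
Import GRing.Theory.
Set Implicit Arguments. Unset Strict Implicit.
Local Open Scope ring_scope.

Section Aux.
Variables (R : pzRingType) (V : lmodType R) (C : bicomplex V).

Definition hom p q (w : V) := P C p q w = w.

Lemma Phom p q w p' q' : hom p q w -> P C p' q' w = if (p'==p)&&(q'==q) then w else 0.
Proof. by move=> h; rewrite -{1}h P_orth h. Qed.

Lemma Pzero p q w p' q' : hom p q w -> ~~((p'==p)&&(q'==q)) -> P C p' q' w = 0.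
Proof. by move=> h /negbTE ne; rewrite (Phom _ _ h) ne. Qed.

Lemma homP p q v : hom p q (P C p q v).
Proof. by rewrite /hom P_orth !eqxx. Qed.

Lemma hom_d10 p q w : hom p q w -> hom p.+1 q (d10 C w).
Proof. by move=> h; rewrite /hom -h; symmetry; apply: d10_hom. Qed.
Lemma hom_d01 p q w : hom p q w -> hom p q.+1 (d01 C w).
Proof. by move=> h; rewrite /hom -h; symmetry; apply: d01_hom. Qed.
Lemma hom_d21 p q w : hom p q.+1 w -> hom p.+2 q (d21 C w).
Proof. by move=> h; rewrite /hom -h; symmetry; apply: d21_hom. Qed.
Lemma d21_zero p w : hom p 0 w -> d21 C w = 0.
Proof. by move=> h; rewrite -h; apply: d21_0. Qed.

Lemma P0_d21 p q w p' q' : hom p q w -> p' != p.+2 -> P C p' q' (d21 C w) = 0.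
Proof.
case: q => [|q] h ne; first by rewrite (d21_zero h) linear0.
by apply: (Pzero (hom_d21 h)); rewrite (negbTE ne).
Qed.

Definition S m v := \sum_(i < m.+1) P C i (m - i) v.

Lemma S_hom p q w m : hom p q w -> (p + q)%N = m -> S m w = w.
Proof.
move=> h <-; rewrite /S.
have lt : (p < (p+q).+1)%N by lia.
rewrite (bigD1 (Ordinal lt)) //= big1 ?addr0.
  by rewrite (Phom _ _ h) eqxx addKn eqxx.
move=> i ne; apply: (Pzero h); apply/negP=> /andP[/eqP e _]; move: ne.
by apply/negP; rewrite negbK; apply/eqP; apply: val_inj.
Qed.

Lemma S_sum I (r : seq I) (Q : pred I) F m :
  S m (\sum_(j <- r | Q j) F j) = \sum_(j <- r | Q j) S m (F j).
Proof. rewrite /S; under eq_bigr => i _ do rewrite linear_sum; exact: exchange_big. Qed.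

Lemma S_split m v : S m v = pi1 C m v + P C m 0 v.
Proof. by rewrite /S big_ord_recr /= subnn. Qed.

Lemma lin3 (f g h : {linear V -> V}) a u v :
  f (a*:u+v) + g (a*:u+v) + h (a*:u+v) = a*:(f u + g u + h u) + (f v + g v + h v).
Proof. by rewrite !linearP !scalerDr (addrACA (a *: f u)) (addrACA (a *: f u + a *: g u)). Qed.


Lemma linB (f : V -> V) (fP : forall a u v, f (a*:u+v) = a*:f u + f v) u v :
  f (u - v) = f u - f v.
Proof. by rewrite -scaleN1r addrC fP scaleN1r addrC. Qed.
Lemma linD (f : V -> V) (fP : forall a u v, f (a*:u+v) = a*:f u + f v) u v :
  f (u + v) = f u + f v.
Proof. by rewrite -[u]scale1r fP !scale1r. Qed.
Lemma lin0 (f : V -> V) (fP : forall a u v, f (a*:u+v) = a*:f u + f v) :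
  f 0 = 0.
Proof. by have := linB fP 0 0; rewrite !subrr. Qed.

Lemma dtotP a u v : dtot C (a*:u+v) = a*: dtot C u + dtot C v.
Proof. exact: lin3. Qed.
Lemma pi1P m a u v : pi1 C m (a*:u+v) = a*: pi1 C m u + pi1 C m v.
Proof. by rewrite /pi1 scaler_sumr -big_split; apply: eq_bigr => i _; apply: linearP. Qed.
Lemma SP m a u v : S m (a*:u+v) = a*: S m u + S m v.
Proof. by rewrite /S scaler_sumr -big_split; apply: eq_bigr => i _; apply: linearP. Qed.
Lemma rhoP k a u v : rho_rep C k (a*:u+v) = a*: rho_rep C k u + rho_rep C k v.
Proof.
case: k => [|k]; rewrite /rho_rep; first by rewrite !linearP !add0r.
by rewrite !linearP scalerDr addrACA.
Qed.

Lemma dtot_sum I (r : seq I) (Q : pred I) F :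
  dtot C (\sum_(j <- r | Q j) F j) = \sum_(j <- r | Q j) dtot C (F j).
Proof. by rewrite /dtot !linear_sum -!big_split. Qed.

Lemma Pdtot p q w : P C p q (dtot C w) = P C p q (d21 C w) + P C p q (d10 C w) + P C p q (d01 C w).
Proof. by rewrite /dtot !linearD. Qed.

Lemma inDeg_dtot k eta : inDeg C k eta -> inDeg C k.+1 (dtot C eta).
Proof.
move=> hd; change (dtot C eta = S k.+1 (dtot C eta)).
have E : dtot C eta = \sum_(i < k.+1) dtot C (P C i (k - i) eta) by rewrite {1}hd dtot_sum.
rewrite E S_sum; apply: eq_bigr => i _.
have hi := ltn_ord i.
move: (homP i (k - i) eta); case eq: (k - i)%N => [|q] hw.
  rewrite /dtot !(linD (SP _)) (d21_zero hw) (lin0 (SP _)) !add0r.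
  by rewrite (S_hom (hom_d10 hw)) ?(S_hom (hom_d01 hw)) //; lia.
rewrite /dtot !(linD (SP _)).
by rewrite (S_hom (hom_d21 hw)) ?(S_hom (hom_d10 hw)) ?(S_hom (hom_d01 hw)) //; lia.
Qed.

Lemma K2 k eta : inDeg C k eta -> P C k.+1 0 (dtot C eta) = rho_rep C k eta.
Proof.
move=> hd; rewrite {1}hd dtot_sum linear_sum big_ord_recr /= subnn.
have hw0 := homP k 0 eta.
rewrite Pdtot (d21_zero hw0) linear0 add0r (hom_d10 hw0) (Pzero (hom_d01 hw0)) ?addr0 ?andbF //.
case: k hd hw0 => [|k] hd hw0; first by rewrite big_ord0 /rho_rep !add0r.
rewrite big_ord_recr /= subSnn.
have hw1 := homP k 1 eta.
rewrite Pdtot (hom_d21 hw1) (Pzero (hom_d10 hw1)) ?andbF // (Pzero (hom_d01 hw1)) ?andbF //.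
rewrite big1 ?add0r ?addr0 //.
move=> i _; have hi := ltn_ord i; have hw := homP i (k.+1 - i) eta.
rewrite Pdtot (P0_d21 _ hw); last by apply/negP => /eqP; lia.
rewrite (Pzero (hom_d10 hw)); last by apply/negP => /andP[/eqP ? /eqP ?]; lia.
rewrite (Pzero (hom_d01 hw)); last by apply/negP => /andP[/eqP ? /eqP ?]; lia.
by rewrite !addr0.
Qed.


Definition adm k eta := inDeg C k eta /\ pi1 C k.+1 (dtot C eta) = 0.

Lemma KEY k eta : adm k eta -> dtot C eta = rho_rep C k eta /\ hom k.+1 0 (dtot C eta).
Proof.
move=> [hd hp]; have e : dtot C eta = S k.+1 (dtot C eta) := inDeg_dtot hd.
rewrite S_split hp add0r in e.
by split; [rewrite e K2 | rewrite /hom -e].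
Qed.

Lemma ddL v : dtot C (dtot C v) = 0.
Proof. exact: dd_0. Qed.

Lemma d01_zero m r : hom m 0 r -> P C m 1 (dtot C r) = 0 -> d01 C r = 0.
Proof.
move=> h; rewrite Pdtot (d21_zero h) linear0 add0r (Pzero (hom_d10 h)) ?andbF //.
by rewrite add0r (hom_d01 h).
Qed.

Lemma inB_intro m x : hom m 0 x -> d01 C x = 0 -> inBN C 0 m (dtot C x).
Proof. move=> h1 h2; exists x; split => //; rewrite /inN leq0n /inNpq /inC subn0; split => //; split => //; exact: d21_zero h1. Qed.

Lemma inB_lin m a u v : inBN C 0 m u -> inBN C 0 m v -> inBN C 0 m (a*:u+v).
Proof.
rewrite /inBN /inN leq0n /inNpq /inC subn0.
move=> [x [[hx1 [hx2 hx3]] ->]] [y [[hy1 [hy2 hy3]] ->]].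
exists (a*:x+y); split; last by rewrite dtotP.
by rewrite !linearP hx1 hy1 hx2 hy2 hx3 hy3 scaler0 add0r.
Qed.

Lemma inB0 m : inBN C 0 m 0.
Proof. exists 0; rewrite /inN leq0n /inNpq /inC subn0 /dtot !linear0 !addr0. by []. Qed.

Definition cong m u v := inBN C 0 m (u - v).
Lemma cong_refl m u : cong m u u.
Proof. by rewrite /cong subrr; apply: inB0. Qed.
Lemma cong_add m u u' v v' : cong m u u' -> cong m v v' -> cong m (u+v) (u'+v').
Proof. move=> h1 h2; rewrite /cong opprD addrACA; have := inB_lin 1 h1 h2; by rewrite scale1r. Qed.
Lemma cong_trans m u v w : cong m u v -> cong m v w -> cong m u w.
Proof. move=> h1 h2; have := inB_lin 1 h1 h2; by rewrite scale1r /cong addrA subrK. Qed.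
Lemma cong_scale m a u v : cong m u v -> cong m (a*:u) (a*:v).
Proof. move=> h; have := inB_lin a h (inB0 m); by rewrite addr0 /cong scalerBr. Qed.
Lemma cong_sym m u v : cong m u v -> cong m v u.
Proof. move=> h; have := inB_lin (-1) h (inB0 m); by rewrite addr0 scaleN1r opprB. Qed.

Lemma WD k eta eta' : adm k eta -> adm k eta' -> pi1 C k eta = pi1 C k eta' ->
  cong k (rho_rep C k eta) (rho_rep C k eta').
Proof.
move=> [hd hp] [hd' hp'] e.
have hdS : S k eta = eta by [].
have hdS' : S k eta' = eta' by [].
have hdd : inDeg C k (eta - eta').
  by change (eta - eta' = S k (eta - eta')); rewrite (linB (SP k)) hdS hdS'.
have hpd : pi1 C k.+1 (dtot C (eta - eta')) = 0.
  by rewrite (linB dtotP) (linB (pi1P _)) hp hp' subrr.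
have ad : adm k (eta - eta') by [].
have [Ed Hd] := KEY ad.
have pd0 : pi1 C k (eta - eta') = 0 by rewrite (linB (pi1P _)) e subrr.
have d0 : eta - eta' = P C k 0 (eta - eta').
  by move: (hdd : eta - eta' = S k (eta - eta')); rewrite S_split pd0 add0r.
rewrite /cong -(linB (rhoP k)) -Ed; apply: inB_intro; first by rewrite /hom -d0.
by apply: (d01_zero (m:=k)); [rewrite /hom -d0 | rewrite (Pzero Hd) ?andbF].
Qed.

Definition rhoF k (xi : V) : V -> Prop := fun y =>
  exists eta, adm k eta /\ pi1 C k eta = xi /\ inBN C 0 k (y - rho_rep C k eta).

Lemma rhoE k eta : adm k eta -> rhoF k (pi1 C k eta) = cls C k (rho_rep C k eta).
Proof.
move=> a; apply: functional_extensionality => y; apply: propositional_extensionality; split.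
  by move=> [e' [a' [pe B']]]; apply: (cong_trans B'); apply: WD.
by move=> hy; exists eta.
Qed.

End Aux.

Theorem lemma5p2 (R : pzRingType) (V : lmodType R) (C : bicomplex V) (k : nat) :
  exists rho : V -> (V -> Prop),
    (forall eta : V, inDeg C k eta -> pi1 C k.+1 (dtot C eta) = 0 ->
        inZN C 0 k.+1 (rho_rep C k eta) /\
        rho (pi1 C k eta) = cls C k (rho_rep C k eta)) /\
    (forall (a : R) (xi xi' : V), inA C k xi -> inA C k xi' ->
        rho (a *: xi + xi') = clsAdd C k (clsScale C k a (rho xi)) (rho xi')) /\
    (forall xi : V, inZ1 C k xi <-> (inA C k xi /\ rho xi = cls0 C k)).
Proof.
exists (rhoF C k); split.
  move=> eta hd hp; have a : adm C k eta by [].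
  split; last exact: rhoE.
  have [E H] := KEY a; rewrite -E; split; last exact: ddL.
  rewrite /inN leq0n /inNpq /inC subn0; split => //; split; last exact: d21_zero H.
  by apply: (d01_zero H); rewrite ddL linear0.
split.
  move=> a xi xi' [e [hd [hp pe]]] [e' [hd' [hp' pe']]].
  have a1 : adm C k e by [].
  have a2 : adm C k e' by [].
  have a3 : adm C k (a*:e+e').
    split; first by change (a*:e+e' = S C k (a*:e+e')); rewrite SP; congr (_ *: _ + _).
    by rewrite dtotP pi1P hp hp' scaler0 add0r.
  rewrite -pe -pe' -pi1P (rhoE a3) (rhoE a1) (rhoE a2) rhoP.
  apply: functional_extensionality => z; apply: propositional_extensionality; split.
    move=> hz; exists (a *: rho_rep C k e), (rho_rep C k e'); split.
      by exists (rho_rep C k e); split; apply: cong_refl.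
    by split; [apply: cong_refl | apply: hz].
  move=> [x [y [[x0 [hx0 hx]] [hy hz]]]].
  apply: (cong_trans hz); apply: cong_add => //.
  by apply: (cong_trans hx); apply: cong_scale.
move=> xi; split.
  move=> [e [[hd hM] [hp pe]]]; have a : adm C k e by [].
  split; first by exists e.
  rewrite -pe (rhoE a); have [E H] := KEY a.
  have B : cong C k (rho_rep C k e) 0.
    by move: (hM 0%N (leq0n _)); rewrite subn0 H E /cong subr0.
  apply: functional_extensionality => y; apply: propositional_extensionality; split.
    by move=> h; apply: (cong_trans h).
  by move=> h; apply: (cong_trans h); apply: cong_sym.
move=> [[e [hd [hp pe]]] hr]; have a : adm C k e by [].
rewrite -pe (rhoE a) in hr; have [E H] := KEY a.
have B : cong C k (rho_rep C k e) 0.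
  have : cls C k (rho_rep C k e) (rho_rep C k e) by apply: cong_refl.
  by rewrite hr.
exists e; split; last by [].
split => // j; case: j => [|j] hj.
  by rewrite subn0 H E; move: B; rewrite /cong subr0.
rewrite (Pzero H) ?andbF //; exists 0; split; last by rewrite /dtot !linear0 !addr0.
by rewrite /inN; case: ifP => _ //; rewrite /inNpq /inC !linear0.
Qed.
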